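(* Let $m\ge2$ be an integer and $k\ge0$. Then \[ \zeta^t(\{m\}_k)=\sum_{j=0}^k t^j\zeta^\star(\{m\}_j)(1-t)^{k-j}\zeta(\{m\}_{k-j}), \] and \[ \zeta^t(\{m\}_k)=\frac1{k!}B_k(x_1,\dots,x_k),\qquad x_\ell=(\ell-1)!\,\zeta(m\ell)\big(t^\ell-(t-1)^\ell\big). \]
   Context: For $\vec\ell=(\ell_1,\dots,\ell_k)$ with $\ell_1\ge\cdots\ge\ell_k\ge1$ let $\sigma(\vec\ell)=|\{1\le j\le k-1:\ell_j=\ell_{j+1}\}|$. Define $\zeta^t(\{m\}_k)=\sum_{\ell_1\ge\cdots\ge\ell_k\ge1}t^{\sigma(\vec\ell)}\prod_i\ell_i^{-m}$, $\zeta(\{m\}_k)=\sum_{\ell_1>\cdots>\ell_k\ge1}\prod_i\ell_i^{-m}$, $\zeta^\star(\{m\}_k)=\sum_{\ell_1\ge\cdots\ge\ell_k\ge1}\prod_i\ell_i^{-m}$ (all $=1$ for $k=0$), and $\zeta(s)=\sum_{j\ge1}j^{-s}$. Complete Bell polynomials: $\exp(\sum_{\ell\ge1}x_\ell z^\ell/\ell!)=\sum_{j\ge0}B_j(x_1,\dots,x_j)z^j/j!$. *)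

(* Defs.v *)
From Stdlib Require Import Reals List Arith.
Import ListNotations.
Open Scope R_scope.

Fixpoint wdec (k b : nat) : list (list nat) :=
  match k with
  | O => [ [] ]
  | S k' => flat_map (fun l1 => map (cons l1) (wdec k' l1)) (seq 1 b)
  end.

Fixpoint sdec (k b : nat) : list (list nat) :=
  match k with
  | O => [ [] ]
  | S k' => flat_map (fun l1 => map (cons l1) (sdec k' (l1 - 1))) (seq 1 b)
  end.

Fixpoint sigma (l : list nat) : nat :=
  match l with
  | a :: ((b :: _) as r) => ((if Nat.eqb a b then 1 else 0) + sigma r)%nat
  | _ => O
  end.

Definition prodinv (m : nat) (l : list nat) : R :=
  fold_right (fun a acc => / (INR a) ^ m * acc) 1 l.

Definition sumR (xs : list R) : R := fold_right Rplus 0 xs.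

(* Partial sums (all indices <= N) of the defining series. *)
Definition zetat_N (t : R) (m k N : nat) : R :=
  sumR (map (fun l => t ^ (sigma l) * prodinv m l) (wdec k N)).
Definition zetastar_N (m k N : nat) : R :=
  sumR (map (fun l => prodinv m l) (wdec k N)).
Definition zetaMZV_N (m k N : nat) : R :=
  sumR (map (fun l => prodinv m l) (sdec k N)).
Definition zeta1_N (s N : nat) : R :=
  sumR (map (fun j => / (INR j) ^ s) (seq 1 N)).

Definition fps := nat -> R.
Definition fps_mul (p q : fps) : fps :=
  fun n => sum_f_R0 (fun i => p i * q (n - i)%nat) n.
Fixpoint fps_pow (p : fps) (n : nat) : fps :=
  match n with
  | O => fun i => if Nat.eqb i 0 then 1 else 0
  | S n' => fps_mul p (fps_pow p n')
  end.

(* Coefficient of z^k in exp(p(z)) for p with zero constant term: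
   exp(p) = sum_n p^n/n!, and only n <= k contribute to z^k. *)
Definition fps_exp_coef (p : fps) (k : nat) : R :=
  sum_f_R0 (fun n => / INR (fact n) * fps_pow p n k) k.

(* Complete Bell polynomial: exp(sum_{l>=1} x_l z^l / l!) = sum_j B_j z^j / j!.
   B_k only depends on x_1..x_k. *)
Definition Bell (k : nat) (x : nat -> R) : R :=
  INR (fact k) *
  fps_exp_coef (fun l => if Nat.eqb l 0 then 0 else x l / INR (fact l)) k.

(* Main.v *)
From Stdlib Require Import Reals List Arith Lia Lra FunctionalExtensionality.
Require Import Defs.
Import ListNotations.
Open Scope R_scope.

Lemma sumR_app a b : sumR (a ++ b) = sumR a + sumR b.
Proof. induction a as [|x a IH]; simpl; [ring | rewrite IH; ring]. Qed.

Lemma sumR_map_scale {A : Type} c (f : A -> R) L :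
  sumR (map (fun l => c * f l) L) = c * sumR (map f L).
Proof. induction L as [|x L IH]; simpl; [ring | rewrite IH; ring]. Qed.

Lemma sumR_map_ext {A : Type} (f g : A -> R) L :
  (forall x, In x L -> f x = g x) -> sumR (map f L) = sumR (map g L).
Proof.
induction L as [|x L IH]; simpl; intros H; [reflexivity|].
rewrite H by auto. rewrite IH by auto. reflexivity.
Qed.

Lemma wdec_S k b : wdec (S k) (S b) = wdec (S k) b ++ map (cons (S b)) (wdec k (S b)).
Proof.
cbn [wdec]. rewrite seq_S, flat_map_app. simpl. rewrite app_nil_r. reflexivity.
Qed.

Lemma wdec_bound k b l : In l (wdec k b) -> forall a, In a l -> (a <= b)%nat.
Proof.
revert b l. induction k as [|k IH]; intros b l Hl a Ha.
- simpl in Hl. destruct Hl as [<-|[]]. destruct Ha.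
- cbn [wdec] in Hl. apply in_flat_map in Hl. destruct Hl as [l1 [Hl1 Hl]].
  apply in_map_iff in Hl. destruct Hl as [l' [<- Hl']].
  apply in_seq in Hl1.
  destruct Ha as [<-|Ha]; [lia|].
  specialize (IH _ _ Hl' a Ha). lia.
Qed.

Lemma sigma_cons_gt c l : (forall a, In a l -> (a < c)%nat) -> sigma (c :: l) = sigma l.
Proof.
intros H. destruct l as [|a l]; [reflexivity|].
cbn [sigma]. assert (Hac : (a < c)%nat) by (apply H; left; auto).
destruct (Nat.eqb c a) eqn:E; [apply Nat.eqb_eq in E; lia|]. reflexivity.
Qed.

Definition Wf (t : R) (m k b : nat) : R :=
  sumR (map (fun l => t ^ sigma (S b :: l) * prodinv m l) (wdec k (S b))).

Definition xv (m b : nat) : R := / INR (S b) ^ m.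

Lemma Z_rec t m k b :
  zetat_N t m (S k) (S b) = zetat_N t m (S k) b + xv m b * Wf t m k b.
Proof.
unfold zetat_N, Wf. rewrite wdec_S, map_app, sumR_app. f_equal.
rewrite map_map, <- sumR_map_scale. apply sumR_map_ext. intros l _.
cbn [prodinv fold_right]. unfold xv, prodinv. ring.
Qed.

Lemma W_rec t m k b :
  Wf t m (S k) b = zetat_N t m (S k) b + t * xv m b * Wf t m k b.
Proof.
unfold zetat_N, Wf at 1. rewrite wdec_S, map_app, sumR_app. f_equal.
- apply sumR_map_ext. intros l Hl. rewrite sigma_cons_gt; [reflexivity|].
  intros a Ha. pose proof (wdec_bound _ _ _ Hl a Ha). lia.
- unfold Wf. rewrite map_map, <- sumR_map_scale. apply sumR_map_ext. intros l _.
  cbn [sigma]. rewrite Nat.eqb_refl. cbn [prodinv fold_right].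
  unfold xv, prodinv. simpl pow. ring.
Qed.

Lemma W0 t m b : Wf t m 0 b = 1.
Proof. unfold Wf. simpl. ring. Qed.

Lemma Z0 t m b : zetat_N t m 0 b = 1.
Proof. unfold zetat_N. simpl. unfold prodinv. simpl. ring. Qed.

Lemma ZS0 t m k : zetat_N t m (S k) 0 = 0.
Proof. reflexivity. Qed.

Lemma sdec_S k b : sdec (S k) (S b) = sdec (S k) b ++ map (cons (S b)) (sdec k b).
Proof.
cbn [sdec]. rewrite seq_S, flat_map_app. simpl. rewrite app_nil_r, Nat.sub_0_r. reflexivity.
Qed.

Lemma M_rec m k b :
  zetaMZV_N m (S k) (S b) = zetaMZV_N m (S k) b + xv m b * zetaMZV_N m k b.
Proof.
unfold zetaMZV_N. rewrite sdec_S, map_app, sumR_app. f_equal.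
rewrite map_map, <- sumR_map_scale. apply sumR_map_ext. intros l _.
cbn [prodinv fold_right]. unfold xv, prodinv. ring.
Qed.

Lemma M0 m b : zetaMZV_N m 0 b = 1.
Proof. unfold zetaMZV_N. simpl. unfold prodinv. simpl. ring. Qed.

Lemma MS0 m k : zetaMZV_N m (S k) 0 = 0.
Proof. reflexivity. Qed.

Lemma zeta1_S s N : zeta1_N s (S N) = zeta1_N s N + / INR (S N) ^ s.
Proof.
unfold zeta1_N. rewrite seq_S, map_app, sumR_app. simpl. ring.
Qed.

Lemma zeta1_0 s : zeta1_N s 0 = 0.
Proof. reflexivity. Qed.

Lemma zstar_t1 m j N : zetastar_N m j N = zetat_N 1 m j N.
Proof.
unfold zetastar_N, zetat_N. apply sumR_map_ext. intros l _. rewrite pow1. ring.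
Qed.


Definition PL (zeta : nat -> R) (m : nat) (t : R) : nat -> R :=
  fun l => if Nat.eqb l 0 then 0 else
    INR (fact (l - 1)) * zeta (m * l)%nat * (t ^ l - (t - 1) ^ l) / INR (fact l).
Definition qL (zeta : nat -> R) (m : nat) (t : R) : nat -> R :=
  fun i => zeta (m * i)%nat * (t ^ i - (t - 1) ^ i).

Lemma PL0 zeta m t : PL zeta m t 0 = 0.
Proof. reflexivity. Qed.

Lemma qL0 zeta m t : qL zeta m t 0 = 0.
Proof. unfold qL. simpl. ring. Qed.

Lemma PL_D zeta m t i : INR (S i) * PL zeta m t (S i) = qL zeta m t (S i).
Proof.
unfold PL, qL. simpl Nat.eqb. cbv iota.
replace (S i - 1)%nat with i by lia.
change (fact (S i)) with (S i * fact i)%nat. rewrite mult_INR.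
field. split; [apply INR_fact_neq_0 | apply not_0_INR; lia].
Qed.

Lemma CV_const (c : R) : Un_cv (fun _ => c) c.
Proof. intros eps Heps. exists 0%nat. intros n _. unfold R_dist. rewrite Rminus_diag, Rabs_R0. exact Heps. Qed.

Lemma zeta1_pos s N : 0 <= zeta1_N s N.
Proof.
induction N as [|N IH]; [rewrite zeta1_0; lra|].
rewrite zeta1_S. assert (0 < / INR (S N) ^ s).
{ apply Rinv_0_lt_compat, pow_lt, lt_0_INR; lia. } lra.
Qed.

Lemma zeta1_bound s N : (2 <= s)%nat -> zeta1_N s (S N) <= 2 - / INR (S N).
Proof.
intros hs. induction N as [|N IH].
- rewrite zeta1_S, zeta1_0. simpl INR. rewrite pow1, Rinv_1. apply Req_le; ring.
- rewrite zeta1_S.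
  set (a := INR (S N)). assert (ha : 1 <= a) by (unfold a; apply (le_INR 1); lia).
  assert (hb : INR (S (S N)) = a + 1) by (unfold a; rewrite (S_INR (S N)); reflexivity).
  rewrite hb.
  assert (h1 : (a + 1) ^ 2 <= (a + 1) ^ s) by (apply Rle_pow; [lra | exact hs]).
  assert (h2 : / (a + 1) ^ s <= / (a * (a + 1))).
  { apply Rinv_le_contravar. nra. simpl in h1. nra. }
  assert (h3 : / (a * (a + 1)) = / a - / (a + 1)) by (field; lra).
  change (INR (S N)) with a in IH. lra.
Qed.

Lemma zeta1_cv s : (2 <= s)%nat -> { l | Un_cv (fun N => zeta1_N s N) l }.
Proof.
intros hs. apply growing_cv.
- intros n. rewrite zeta1_S. assert (0 < / INR (S n) ^ s).
  { apply Rinv_0_lt_compat, pow_lt, lt_0_INR; lia. } lra.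
- exists 2. intros x [n ->]. destruct n as [|n]; [rewrite zeta1_0; lra|].
  pose proof (zeta1_bound s n hs). assert (0 < / INR (S n)).
  { apply Rinv_0_lt_compat, lt_0_INR; lia. } lra.
Qed.

Lemma zeta_exists : exists zeta : nat -> R,
  forall s, (2 <= s)%nat -> Un_cv (fun N => zeta1_N s N) (zeta s).
Proof.
exists (fun s => match le_lt_dec 2 s with left h => proj1_sig (zeta1_cv s h) | right _ => 0 end).
intros s hs. destruct (le_lt_dec 2 s) as [h|h]; [exact (proj2_sig (zeta1_cv s h)) | lia].
Qed.

Definition RHS1 (Zs Zm : nat -> R) (t : R) (k : nat) : R :=
  sum_f_R0 (fun j => t ^ j * Zs j * (1 - t) ^ (k - j) * Zm (k - j)%nat) k.
Definition RHS2 (zeta : nat -> R) (m : nat) (t : R) (k : nat) : R :=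
  / INR (fact k) *
  Bell k (fun l => INR (fact (l - 1)) * zeta (m * l)%nat * (t ^ l - (t - 1) ^ l)).

Lemma bell_id zeta m t k : RHS2 zeta m t k = fps_exp_coef (PL zeta m t) k.
Proof.
unfold RHS2, Bell. rewrite <- Rmult_assoc, Rinv_l, Rmult_1_l by apply INR_fact_neq_0.
reflexivity.
Qed.

From mathcomp Require all_boot all_algebra Rstruct zify ring.
Module MC.
Import all_boot all_algebra Rstruct zify ring.
Set Implicit Arguments. Unset Strict Implicit. Unset Printing Implicit Defensive.
Import GRing.Theory Num.Theory.
Local Open Scope ring_scope.

Section FPS.
Variable V : comNzRingType.
Implicit Types p q r : nat -> V.

Definition conv p q : nat -> V := fun n => \sum_(i < n.+1) p i * q (n - i)%N.

Lemma conv_rev p q n : conv p q n = \sum_(j < n.+1) p (n - j)%N * q j.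
Proof.
rewrite /conv (reindex_inj rev_ord_inj) /=.
by apply: eq_bigr => j _; rewrite subSS subKn // -ltnS.
Qed.

Lemma convC p q : conv p q = conv q p.
Proof.
apply: functional_extensionality => n; rewrite conv_rev /conv.
by apply: eq_bigr => j _; rewrite mulrC.
Qed.

Lemma convA p q r : conv (conv p q) r = conv p (conv q r).
Proof.
apply: functional_extensionality => i.
pose c3 j k := p j * (q (i - j - k)%N * r k).
transitivity (\sum_(k < i.+1) \sum_(j < i.+1 | (j <= i - k)%N) c3 j k).
  rewrite conv_rev; apply: eq_bigr => k _.
  rewrite /conv big_distrl /= (big_ord_narrow_leq (leq_subr _ _)).
  by apply: eq_bigr => j _; rewrite /c3 /= mulrA subnAC.
rewrite (exchange_big_dep predT) //= /conv; apply: eq_bigr => j _.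
rewrite -/(conv q r (i - j)%N) conv_rev big_distrr /=.
transitivity (\sum_(k < i.+1 | (k <= i - j)%N) c3 j k).
  apply: eq_bigl => k.
  have := ltn_ord k; have := ltn_ord j; move=> hj hk.
  by apply/idP/idP; lia.
rewrite (big_ord_narrow_leq (leq_subr _ _)).
by apply: eq_bigr => k _; rewrite /c3 /=.
Qed.

Lemma convDl p q r : conv (fun n => p n + q n) r = fun n => conv p r n + conv q r n.
Proof.
apply: functional_extensionality => n; rewrite /conv -big_split /=.
by apply: eq_bigr => i _; rewrite mulrDl.
Qed.

Lemma convDr p q r : conv p (fun n => q n + r n) = fun n => conv p q n + conv p r n.
Proof. by rewrite convC convDl convC [conv r p]convC. Qed.

Lemma convZl (c : V) p q : conv (fun n => c * p n) q = fun n => c * conv p q n.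
Proof.
apply: functional_extensionality => n; rewrite /conv big_distrr /=.
by apply: eq_bigr => i _; rewrite mulrA.
Qed.

Lemma convZr (c : V) p q : conv p (fun n => c * q n) = fun n => c * conv p q n.
Proof. by rewrite convC convZl convC. Qed.

Definition D p : nat -> V := fun n => n%:R * p n.

Lemma D_conv p q : D (conv p q) = fun n => conv (D p) q n + conv p (D q) n.
Proof.
apply: functional_extensionality => n; rewrite /D /conv -big_split big_distrr /=.
apply: eq_bigr => i _.
have hi : (i + (n - i) = n)%N by rewrite subnKC // -ltnS.
by rewrite -{1}hi natrD mulrDl !mulrA [p i * _]mulrC.
Qed.

Definition d0 : nat -> V := fun i => if Nat.eqb i 0 then 1 else 0.

Lemma conv_d0l p : conv d0 p = p.
Proof.
apply: functional_extensionality => n; rewrite /conv big_ord_recl /= mul1r subn0.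
by rewrite big1 ?addr0 // => i _; rewrite mul0r.
Qed.

Lemma conv_d0r p : conv p d0 = p.
Proof. by rewrite convC conv_d0l. Qed.

Lemma newton_step F G q r :
  D F = conv F q -> D G = conv G r ->
  D (conv G F) = conv (conv G F) (fun i => q i + r i).
Proof.
move=> hF hG; rewrite D_conv hF hG convDr !convA [conv F r]convC.
by apply: functional_extensionality => n; rewrite addrC.
Qed.

Lemma conv_geom (c : V) p q :
  conv (fun i => c ^+ i * p i) (fun i => c ^+ i * q i) = fun n => c ^+ n * conv p q n.
Proof.
apply: functional_extensionality => n; rewrite /conv big_distrr /=.
apply: eq_bigr => i _.
have hi : (i + (n - i) = n)%N by rewrite subnKC // -ltnS.
by rewrite mulrACA -exprD hi.
Qed.

Fixpoint pw (P : nat -> V) (n : nat) : nat -> V :=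
  match n with O => d0 | S n' => conv P (pw P n') end.

Lemma pw_low P n j : P 0%N = 0 -> (j < n)%N -> pw P n j = 0.
Proof.
move=> P0; elim: n j => [//|n IH] j hj /=.
rewrite /conv big1 // => i _.
case: i => [[|i'] hi] /=; first by rewrite P0 mul0r.
rewrite IH ?mulr0 //; lia.
Qed.

Lemma D_d0 : D d0 = fun _ => 0.
Proof. by apply: functional_extensionality => -[|n]; rewrite /D /d0 /= ?mulr0 ?mul0r. Qed.

Lemma D_pw P n : D (pw P n.+1) = fun j => n.+1%:R * conv (D P) (pw P n) j.
Proof.
elim: n => [|n IH].
  rewrite /= D_conv D_d0; apply: functional_extensionality => j.
  by rewrite mul1r [X in _ + X]/conv big1 ?addr0 // => i _; rewrite mulr0.
rewrite [pw P n.+2]/= D_conv IH convZr; apply: functional_extensionality => j.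
rewrite -[conv P (conv (D P) _)]convA [conv P (D P)]convC convA /=.
by rewrite -[n.+2]addn1 natrD mulrDl mul1r addrC.
Qed.
End FPS.

Section EXP.
Variable F : numFieldType.
Implicit Types P : nat -> F.

Definition ecoef P (k : nat) : F := \sum_(n < k.+1) (n`!%:R)^-1 * pw P n k.

Lemma ecoef_pad P j k : P 0%N = 0 -> (j <= k)%N ->
  ecoef P j = \sum_(n < k.+1) (n`!%:R)^-1 * pw P n j.
Proof.
move=> P0 hjk; rewrite /ecoef (big_ord_widen k.+1 (fun n => (n`!%:R)^-1 * pw P n j)) //.
rewrite big_mkcond /=; apply: eq_bigr => n _.
case: ifP => // hn; rewrite pw_low ?mulr0 //; lia.
Qed.

Lemma ecoef_rec P k : P 0%N = 0 -> k%:R * ecoef P k = conv (D P) (ecoef P) k.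
Proof.
move=> P0.
have DP0 : D P 0%N = 0 by rewrite /D P0 mulr0.
transitivity (\sum_(n < k.+1) (n`!%:R)^-1 * conv (D P) (pw P n) k).
  have last0 : conv (D P) (pw P k) k = 0.
    rewrite /conv big1 // => i _; case: i => [[|i'] hi] /=; first by rewrite DP0 mul0r.
    by rewrite pw_low ?mulr0 //; lia.
  rewrite big_ord_recr /= last0 mulr0 addr0.
  rewrite /ecoef mulr_sumr big_ord_recl /=.
  have -> : k%:R * ((0`!)%:R^-1 * d0 F k) = 0.
    by clear last0; case: k => [|k]; rewrite /d0 /= ?mulr0 ?mul0r.
  rewrite add0r; apply: eq_bigr => n _.
  have h : D (pw P n.+1) k = n.+1%:R * conv (D P) (pw P n) k by rewrite D_pw.
  move: h; rewrite /D => h.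
  rewrite mulrCA h mulrA; congr (_ * _).
  have -> : bump 0 n = n.+1 by rewrite /bump leq0n.
  by rewrite factS natrM invfM mulrAC mulVf ?mul1r // pnatr_eq0.
rewrite /conv.
transitivity (\sum_(i < k.+1) \sum_(n < k.+1) D P i * ((n`!%:R)^-1 * pw P n (k - i)%N)).
  rewrite exchange_big /=; apply: eq_bigr => n _; rewrite big_distrr /=.
  by apply: eq_bigr => i _; rewrite mulrCA.
apply: eq_bigr => i _; rewrite -big_distrr /=.
by rewrite (ecoef_pad P0 (leq_subr i k)).
Qed.
End EXP.


Lemma sumfE (f : nat -> R) n : sum_f_R0 f n = \sum_(i < n.+1) f i.
Proof.
elim: n => [|n IH]; first by rewrite big_ord_recl big_ord0 addr0.
by rewrite big_ord_recr /= -IH.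
Qed.

Definition Zf t m b : nat -> R := fun k => zetat_N t m k b.
Definition Gf (t x : R) : nat -> R := fun i => if i is i'.+1 then t ^+ i' * x ^+ i'.+1 else 1.

Lemma W_closed t m k b :
  Wf t m k b = \sum_(c < k.+1) (t * xv m b) ^+ c * zetat_N t m (k - c) b.
Proof.
elim: k => [|k IH].
  by rewrite W0 big_ord_recl big_ord0 addr0 /= Z0 mulr1.
rewrite W_rec IH [in RHS]big_ord_recl /= subn0 expr0 mul1r RplusE !RmultE; congr (_ + _).
rewrite big_distrr /=; apply: eq_bigr => i _.
by rewrite /bump leq0n /= add1n subSS exprS mulrA.
Qed.

Lemma Zf0 t m : Zf t m 0 = d0 R.
Proof. by apply: functional_extensionality => -[|k]; rewrite /Zf /d0 /= ?Z0 ?ZS0. Qed.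

Lemma Z_step t m b : Zf t m b.+1 = conv (Gf t (xv m b)) (Zf t m b).
Proof.
apply: functional_extensionality => -[|k].
  by rewrite /Zf /conv big_ord_recl big_ord0 addr0 /= !Z0 mul1r.
rewrite /Zf /conv Z_rec W_closed [in RHS]big_ord_recl /= subn0 mul1r RplusE !RmultE; congr (_ + _).
rewrite big_distrr /=; apply: eq_bigr => i _.
rewrite /bump leq0n /= add1n subSS exprMn mulrA; congr (_ * _).
by rewrite exprS mulrCA mulrA.
Qed.

Definition rf (t x : R) : nat -> R := fun i => x ^+ i * (t ^+ i - (t - 1) ^+ i).

Lemma DG t x : D (Gf t x) = conv (rf t x) (Gf t x).
Proof.
apply: functional_extensionality => -[|n].
  by rewrite /D /conv big_ord_recl big_ord0 /rf /=; ring.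
rewrite /D /conv big_ord_recr /= subnn mulr1.
rewrite (eq_bigr (fun i : 'I_n.+1 => x ^+ n.+1 * (t ^+ n - t ^+ (n - i) * (t - 1) ^+ i))); last first.
  move=> i _ /=; have hi : (i <= n)%N by rewrite -ltnS.
  rewrite subSn // /rf /Gf.
  have e1 : x ^+ n.+1 = x ^+ i * x ^+ (n - i).+1 by rewrite -exprD addnS subnKC.
  have e2 : t ^+ n = t ^+ i * t ^+ (n - i) by rewrite -exprD subnKC.
  rewrite e1 e2; ring.
rewrite -big_distrr /= big_split /= sumr_const card_ord sumrN.
have h1 : t - (t - 1) = 1 by ring.
have := subrXX t (t - 1) n.+1; rewrite /= h1 mul1r => <-.
rewrite /rf -mulr_natl; ring.
Qed.

Definition qf t m b : nat -> R := fun i => zeta1_N (Nat.mul m i) b * (t ^+ i - (t - 1) ^+ i).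

Lemma xv_pow m b i : / INR (S b) ^ (Nat.mul m i) = (xv m b) ^+ i.
Proof. by rewrite /xv pow_mult -pow_inv RpowE. Qed.

Lemma Newton t m b : D (Zf t m b) = conv (Zf t m b) (qf t m b).
Proof.
elim: b => [|b IH].
  rewrite Zf0 D_d0 conv_d0l; apply: functional_extensionality => i.
  by rewrite /qf zeta1_0 mul0r.
rewrite Z_step (newton_step IH (etrans (DG t (xv m b)) (convC _ _))) -Z_step.
congr conv; apply: functional_extensionality => i.
by rewrite /qf /rf zeta1_S xv_pow RplusE mulrDl.
Qed.

Definition Mf m b : nat -> R := fun j => zetaMZV_N m j b.
Definition Gm (x : R) : nat -> R := fun i => match i with 0%N => 1 | 1%N => x | _ => 0 end.

Lemma Mf0 m : Mf m 0 = d0 R.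
Proof. by apply: functional_extensionality => -[|k]; rewrite /Mf /d0 /= ?M0 ?MS0. Qed.

Lemma M_step m b : Mf m b.+1 = conv (Gm (xv m b)) (Mf m b).
Proof.
apply: functional_extensionality => -[|k].
  by rewrite /Mf /conv big_ord_recl big_ord0 addr0 /= !M0 mul1r.
rewrite /Mf /conv M_rec [in RHS]big_ord_recl /= subn0 mul1r RplusE !RmultE; congr (_ + _).
rewrite big_ord_recl /= big1 ?addr0; last by move=> i _; rewrite mul0r.
by rewrite /bump leq0n /= add1n subSS subn0.
Qed.

Lemma Zt0 m b : Zf 0 m b = Mf m b.
Proof.
elim: b => [|b IH]; first by rewrite Zf0 Mf0.
rewrite Z_step M_step IH; congr conv; apply: functional_extensionality => -[|[|i]] //=.
  by rewrite expr0 mul1r expr1.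
by rewrite expr0n mul0r.
Qed.

Definition Af t m b : nat -> R := fun j => t ^+ j * zetastar_N m j b.
Definition Bf t m b : nat -> R := fun j => (1 - t) ^+ j * zetaMZV_N m j b.

Lemma A_step t m b : Af t m b.+1 = conv (fun i => (t * xv m b) ^+ i) (Af t m b).
Proof.
have -> : Af t m b.+1 = fun j => t ^+ j * Zf 1 m b.+1 j.
  by apply: functional_extensionality => j; rewrite /Af zstar_t1.
rewrite Z_step -conv_geom; congr conv; apply: functional_extensionality => i.
  by case: i => [|i] /=; rewrite ?mulr1 // expr1n mul1r exprMn.
by rewrite /Af /Zf zstar_t1.
Qed.

Lemma B_step t m b :
  Bf t m b.+1 = conv (fun i => (1 - t) ^+ i * Gm (xv m b) i) (Bf t m b).
Proof.
have -> : Bf t m b.+1 = fun j => (1 - t) ^+ j * Mf m b.+1 j by [].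
by rewrite M_step -conv_geom.
Qed.

Lemma GsGm (t x : R) :
  conv (fun i => (t * x) ^+ i) (fun i => (1 - t) ^+ i * Gm x i) = Gf t x.
Proof.
rewrite convC; apply: functional_extensionality => -[|n].
  by rewrite /conv big_ord_recl big_ord0 /= !expr0 !mul1r addr0.
rewrite /conv big_ord_recl big_ord_recl big1 ?addr0; last first.
  by move=> i _; rewrite mulr0 mul0r.
have -> : lift ord0 (@ord0 n) = 1%N :> nat by [].
rewrite /= subn0 subSS subn0 expr0 expr1 !exprMn exprS !mul1r [x ^+ n.+1]exprS. set a := t ^+ n. set c := x ^+ n. ring.
Qed.

Lemma ident1_fin t m b : Zf t m b = conv (Af t m b) (Bf t m b).
Proof.
elim: b => [|b IH].
  have -> : Af t m 0 = d0 R.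
    apply: functional_extensionality => -[|j]; rewrite /Af /d0 /=.
      by rewrite zstar_t1 Z0 expr0 mulr1.
    by have -> : zetastar_N m j.+1 0 = 0 by []; rewrite mulr0.
  have -> : Bf t m 0 = d0 R.
    apply: functional_extensionality => -[|j]; rewrite /Bf /d0 /=.
      by rewrite M0 expr0 mulr1.
    by rewrite MS0 mulr0.
  by rewrite Zf0 conv_d0l.
rewrite Z_step IH A_step B_step -GsGm !convA; congr conv.
by rewrite -convA [conv (fun i => (1 - t) ^+ i * Gm _ i) (Af t m b)]convC convA.
Qed.


Lemma fps_mulE p q n : fps_mul p q n = conv p q n.
Proof. by rewrite /fps_mul sumfE. Qed.

Lemma fps_powE P n i : fps_pow P n i = pw P n i.
Proof.
elim: n i => [|n IH] i //=.
rewrite fps_mulE; congr (conv _ _ _); apply: functional_extensionality => j; exact: IH.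
Qed.

Lemma factE' n : fact n = n`!.
Proof. elim: n => [//|n IH]; by rewrite factS -IH. Qed.

Lemma fps_expE P k : fps_exp_coef P k = ecoef P k.
Proof.
rewrite /fps_exp_coef sumfE /ecoef; apply: eq_bigr => n _.
by rewrite fps_powE INRE factE' RinvE RmultE.
Qed.

Lemma CVM (u v : nat -> R) a b : Un_cv u a -> Un_cv v b -> Un_cv (fun n => u n * v n) (a * b).
Proof. exact: CV_mult. Qed.

Lemma CVD (u v : nat -> R) a b : Un_cv u a -> Un_cv v b -> Un_cv (fun n => u n + v n) (a + b).
Proof. exact: CV_plus. Qed.

Lemma CVsum (u : nat -> nat -> R) (l : nat -> R) n :
  (forall i, (i < n)%N -> Un_cv (u i) (l i)) ->
  Un_cv (fun N => \sum_(i < n) u i N) (\sum_(i < n) l i).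
Proof.
elim: n => [|n IH] h.
  have -> : (fun N => \sum_(i < 0) u i N) = fun _ => 0.
    by apply: functional_extensionality => N; rewrite big_ord0.
  by rewrite big_ord0; apply: CV_const.
have -> : (fun N => \sum_(i < n.+1) u i N) = fun N => \sum_(i < n) u i N + u n N.
  by apply: functional_extensionality => N; rewrite big_ord_recr.
rewrite big_ord_recr /=; apply: CVD; last exact: h.
by apply: IH => i hi; apply: h; rewrite ltnS ltnW.
Qed.

Lemma DPL zeta m t : D (PL zeta m t) = qL zeta m t.
Proof.
apply: functional_extensionality => -[|i].
  by rewrite /D PL0 qL0 mulr0.
by rewrite /D -(PL_D zeta m t i) RmultE INRE.
Qed.

Section CV.
Variable zeta : nat -> R.
Hypothesis hz : forall s, le 2 s -> Un_cv (fun N => zeta1_N s N) (zeta s).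
Variables (t : R) (m : nat).
Hypothesis hm : le 2 m.

Lemma cv_q j : (0 < j)%N -> Un_cv (fun N => qf t m N j) (qL zeta m t j).
Proof.
move=> hj; rewrite /qf /qL -!RpowE; apply: CVM; last exact: CV_const.
apply: hz. apply/leP. have : (2 <= m)%N by apply/leP. 
move=> h2; rewrite -[Nat.mul m j]/(m * j)%N; nia.
Qed.

Lemma Zrec N k : (0 < k)%N ->
  Zf t m N k = (k%:R)^-1 * \sum_(i < k) Zf t m N i * qf t m N (k - i).
Proof.
move=> hk.
have h : D (Zf t m N) k = conv (Zf t m N) (qf t m N) k by rewrite Newton.
rewrite /D /conv big_ord_recr /= subnn in h.
have q0 : qf t m N 0 = 0 by rewrite /qf !expr0 subrr mulr0.
rewrite q0 mulr0 addr0 in h.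
by rewrite -h mulKf // pnatr_eq0 -lt0n.
Qed.

Lemma erec k : (0 < k)%N ->
  ecoef (PL zeta m t) k = (k%:R)^-1 * \sum_(i < k) ecoef (PL zeta m t) i * qL zeta m t (k - i).
Proof.
move=> hk.
have h := ecoef_rec k (PL0 zeta m t).
rewrite DPL convC /conv big_ord_recr /= subnn qL0 mulr0 addr0 in h.
by rewrite -h mulKf // pnatr_eq0 -lt0n.
Qed.

Lemma cv_zt k : Un_cv (fun N => zetat_N t m k N) (ecoef (PL zeta m t) k).
Proof.
elim/ltn_ind: k => k IH.
case: (posnP k) => [->|hk].
  have -> : ecoef (PL zeta m t) 0 = 1.
    by rewrite /ecoef big_ord_recl big_ord0 addr0 /= invr1 mul1r.
  have -> : (fun N => zetat_N t m 0 N) = fun _ => 1.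
    by apply: functional_extensionality => N; rewrite Z0.
  exact: CV_const.
have -> : (fun N => zetat_N t m k N) =
    fun N => (k%:R)^-1 * \sum_(i < k) Zf t m N i * qf t m N (k - i).
  by apply: functional_extensionality => N; rewrite -Zrec.
rewrite erec //; apply: CVM; first exact: CV_const.
apply: (@CVsum (fun i N => Zf t m N i * qf t m N (k - i)) (fun i => ecoef (PL zeta m t) i * qL zeta m t (k - i)) k) => i hi.
apply: CVM; first exact: IH.
by apply: cv_q; rewrite subn_gt0.
Qed.

Lemma cv_zt' k : Un_cv (fun N => zetat_N t m k N) (fps_exp_coef (PL zeta m t) k).
Proof. rewrite fps_expE; exact: cv_zt. Qed.
End CV.

Section CV2.
Variable zeta : nat -> R.
Hypothesis hz : forall s, le 2 s -> Un_cv (fun N => zeta1_N s N) (zeta s).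
Variable m : nat.
Hypothesis hm : le 2 m.

Lemma cv_star j : Un_cv (fun N => zetastar_N m j N) (fps_exp_coef (PL zeta m 1) j).
Proof.
have -> : (fun N => zetastar_N m j N) = fun N => zetat_N 1 m j N.
  by apply: functional_extensionality => N; rewrite zstar_t1.
exact: cv_zt'.
Qed.

Lemma cv_mzv j : Un_cv (fun N => zetaMZV_N m j N) (fps_exp_coef (PL zeta m 0) j).
Proof.
have -> : (fun N => zetaMZV_N m j N) = fun N => zetat_N 0 m j N.
  apply: functional_extensionality => N.
  by rewrite -[zetaMZV_N m j N]/(Mf m N j) -Zt0.
exact: cv_zt'.
Qed.

Lemma ident1 t k : fps_exp_coef (PL zeta m t) k =
  RHS1 (fun j => fps_exp_coef (PL zeta m 1) j) (fun j => fps_exp_coef (PL zeta m 0) j) t k.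
Proof.
apply: (UL_sequence (fun N => zetat_N t m k N)); first exact: cv_zt'.
rewrite /RHS1 sumfE.
have -> : (fun N => zetat_N t m k N) = fun N => \sum_(i < k.+1)
    t ^+ i * zetastar_N m i N * (1 - t) ^+ (k - i) * zetaMZV_N m (k - i) N.
  apply: functional_extensionality => N.
  rewrite -[zetat_N t m k N]/(Zf t m N k) ident1_fin /conv.
  by apply: eq_bigr => i _; rewrite /Af /Bf !mulrA.
apply: (@CVsum (fun i N => t ^+ i * zetastar_N m i N * (1 - t) ^+ (k - i) * zetaMZV_N m (k - i) N)
   (fun i => Rmult (Rmult (Rmult (pow t i) (fps_exp_coef (PL zeta m 1) i)) (pow (Rminus 1 t) (k - i))) (fps_exp_coef (PL zeta m 0) (k - i))) k.+1) => i hi.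
rewrite !RpowE; apply: CVM; last exact: cv_mzv.
apply: CVM; last exact: CV_const.
apply: CVM; first exact: CV_const.
exact: cv_star.
Qed.
End CV2.

End MC.

Theorem mainTheorem11 (m k : nat) (t : R) (hm : (2 <= m)%nat) :
  exists (Zt : R) (Zstar Zmzv zeta : nat -> R),
    Un_cv (fun N => zetat_N t m k N) Zt /\
    (forall j, Un_cv (fun N => zetastar_N m j N) (Zstar j)) /\
    (forall j, Un_cv (fun N => zetaMZV_N m j N) (Zmzv j)) /\
    (forall s, (2 <= s)%nat -> Un_cv (fun N => zeta1_N s N) (zeta s)) /\
    Zt = sum_f_R0 (fun j => t ^ j * Zstar j * (1 - t) ^ (k - j) * Zmzv (k - j)%nat) k /\
    Zt = / INR (fact k) *
         Bell k (fun l => INR (fact (l - 1)) * zeta (m * l)%nat * (t ^ l - (t - 1) ^ l)).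
Proof.
destruct zeta_exists as [zeta hz].
exists (fps_exp_coef (PL zeta m t) k), (fun j => fps_exp_coef (PL zeta m 1) j),
  (fun j => fps_exp_coef (PL zeta m 0) j), zeta.
split; [exact (@MC.cv_zt' zeta hz t m hm k)|].
split; [intro j; exact (@MC.cv_star zeta hz m hm j)|].
split; [intro j; exact (@MC.cv_mzv zeta hz m hm j)|].
split; [exact hz|].
split; [exact (@MC.ident1 zeta hz m hm t k)|].
exact (eq_sym (bell_id zeta m t k)).
Qed.
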